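(* In the setting below, for every nonempty $A\subseteq[n]$: $\Pr_{\psi\sim\Psi}(E_1(\psi)\wedge\neg E_2(\psi))\le 2^{-6}$.
   Context: $[N]:=\{0,\dots,N-1\}$. Fix integers $n\ge1$ and real $0<\varepsilon<1$. Let $b:=2^{\lceil\log_2(9\cdot 2^{23}\varepsilon^{-2})\rceil}$ and $k:=\lceil\tfrac{15}{2}\ln b+16\rceil$. Hash families: for $d\ge1$, identify $[2^d]$ with $\mathrm{GF}(2^d)$ via binary representation. For $k'\ge1$, $N\le 2^d$, $c\le d$, $\mathcal H_{k'}([N],[2^c])$ is the uniform distribution over tuples $(a_0,\dots,a_{k'-1})\in\mathrm{GF}(2^d)^{k'}$, each giving $x\mapsto(\sum_ia_ix^i)\bmod 2^c$ on $[N]$; $\mathcal G_{k'}([N])$ is uniform over the same tuples giving $x\mapsto\mathrm{tz}(\sum_ia_ix^i)$, $\mathrm{tz}(y)$ = number of trailing zeros of the $d$-bit representation of $y$ ($\mathrm{tz}(0)=d$). Here $d$ is a fixed integer with $2^d\ge N$, $d\ge c$. $\Psi:=\mathcal G_2([n])\times\mathcal H_2([n],[2^5b^2])\times\mathcal H_k([2^5b^2],[b])$ with the uniform product distribution; $\psi=(f,g,h)$. For fixed nonempty $A\subseteq[n]$: $t(f):=\max_{a\in A}f(a)-\log_2b+9$; $s(f):=\max(0,t(f))$; $R(f):=\{a\in A: f(a)\ge s(f)\}$. Events: $E_1(\psi)$: $2^{-16}b\le 2^{-t(f)}|A|\le 2^{-1}b$; $E_2(\psi)$: $\big||R(f)|-2^{-s(f)}|A|\big|\le\frac{\varepsilon}{3}2^{-s(f)}|A|$.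 *)

(* Defs.v *)
From HB Require Import structures.
From mathcomp Require Import all_boot all_order all_algebra.
From mathcomp Require Import reals exp.
Set Implicit Arguments. Unset Strict Implicit. Unset Printing Implicit Defensive.
Import Order.TTheory GRing.Theory Num.Theory.
Local Open Scope ring_scope.

(* GF(2^d) is F_2[X]/(p) for an irreducible p of degree d over 'F_2;
   the integer u < 2^d is identified with the polynomial whose coefficient
   of X^j is bit j of u (binary representation). *)
Definition bitpoly (d u : nat) : {poly 'F_2} :=
  \poly_(j < d) ((odd (u %/ 2 ^ j))%N%:R : 'F_2).

Definition gf_eval (d : nat) (p : {poly 'F_2}) (k' : nat)
  (a : {ffun 'I_k' -> 'I_(2 ^ d)}) (x : nat) : {poly 'F_2} :=
  (\sum_(i < k') bitpoly d (a i) * bitpoly d x ^+ i) %% p.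

Definition coefnz (r : {poly 'F_2}) (j : nat) : bool := r`_j != 0.

(* number of trailing zeros of the d-bit representation (tz 0 = d) *)
Definition tz (d : nat) (r : {poly 'F_2}) : nat :=
  find (fun j => coefnz r j) (iota 0 d).

Definition lowbits (c : nat) (r : {poly 'F_2}) : nat :=
  \sum_(j < c) muln (nat_of_bool (coefnz r j)) (expn 2 j).

Definition Gfun (d : nat) (p : {poly 'F_2}) (k' : nat)
  (a : {ffun 'I_k' -> 'I_(2 ^ d)}) (N : nat) (x : 'I_N) : nat :=
  tz d (gf_eval p a x).

Definition Hfun (d : nat) (p : {poly 'F_2}) (k' : nat)
  (a : {ffun 'I_k' -> 'I_(2 ^ d)}) (N c : nat) (x : 'I_N) : nat :=
  lowbits c (gf_eval p a x).

Definition prob (R : realType) (T : finType) (E : pred T) : R :=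
  #|[set x | E x]|%:R / #|T|%:R.

Definition beta (R : realType) (eps : R) : nat :=
  `|Num.ceil (ln (9 * 2 ^+ 23 / eps ^+ 2) / ln 2)|%N.
Definition bb (R : realType) (eps : R) : nat := (2 ^ beta eps)%N.
Definition kk (R : realType) (eps : R) : nat :=
  `|Num.ceil (15 / 2 * ln ((bb eps)%:R : R) + 16)|%N.

Section Events.
Variables (R : realType) (eps : R) (n : nat) (A : {set 'I_n}).

Definition tf (f : 'I_n -> nat) : int :=
  ((\max_(a in A) f a)%N%:Z - (beta eps)%:Z + 9)%R.
Definition sf (f : 'I_n -> nat) : int := Num.max 0 (tf f).
Definition Rf (f : 'I_n -> nat) : {set 'I_n} :=
  [set a in A | sf f <= (f a)%:Z].

Definition E1 (f : 'I_n -> nat) : bool :=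
  ((2 : R) ^- 16 * (bb eps)%:R <= (2 : R) ^ (- tf f) * #|A|%:R) &&
  ((2 : R) ^ (- tf f) * #|A|%:R <= (2 : R) ^- 1 * (bb eps)%:R).

Definition E2 (f : 'I_n -> nat) : bool :=
  `| #|Rf f|%:R - (2 : R) ^ (- sf f) * #|A|%:R |
    <= eps / 3 * ((2 : R) ^ (- sf f) * #|A|%:R).
End Events.

(* Main.v *)
Require Import Defs.
From HB Require Import structures.
From mathcomp Require Import all_boot all_order all_algebra.
From mathcomp Require Import reals exp.
From mathcomp Require Import sequences.
From mathcomp Require Import zify ring lra.
Import Order.TTheory GRing.Theory Num.Theory.
Local Open Scope ring_scope.

Lemma bb_ge (R : realType) (eps : R) : 0 < eps < 1 ->
  9 * 2^+23 / eps^+2 <= (bb eps)%:R.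
Proof.
case/andP=> e0 e1.
set c := 9 * 2^+23 / eps^+2.
have e2 : 0 < eps ^+ 2 by rewrite exprn_gt0.
have e21 : eps ^+ 2 <= 1 by rewrite expr_le1 // ltW.
have K : (9 * 2^+23 : R) = (9 * 2^23)%N%:R by rewrite natrM natrX.
have cge : 9 * 2^+23 <= c.
  by rewrite /c ler_pdivlMr // ler_piMr // K ler0n.
have c1 : 1 <= c by apply: le_trans cge; rewrite K ler1n.
have c0 : 0 < c by apply: lt_le_trans c1; rewrite ltr01.
have l2 : 0 < ln (2:R) by rewrite ln_gt0 // ltr1n.
set L := ln c / ln 2.
have L0 : 0 <= L.
  by rewrite /L divr_ge0 ?(ltW l2) // -(ln1 R) ler_ln ?posrE.
have hb : L <= (beta eps)%:R.
  rewrite /beta.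
  have cg : (0 <= Num.ceil L)%R by rewrite ceil_ge0; apply: lt_le_trans L0; rewrite ltrN10.
  apply: (le_trans (ceil_ge L)).
  by rewrite natr_absz ler_int ler_norm.
rewrite /bb natrX.
have -> : (2:R) = expR (ln 2) by rewrite lnK // posrE ltr0n.
rewrite -expRM_natl.
have -> : c = expR (L * ln 2) by rewrite /L divfK ?lnK ?posrE // gt_eqF.
by rewrite ler_expR ler_pM2r.
Qed.

Local Close Scope ring_scope.


Lemma bits_sum d u : (u < 2 ^ d)%N -> (\sum_(j < d) odd (u %/ 2 ^ j) * 2 ^ j)%N = u.
Proof.
elim: d u => [|d IH] u hu.
  by rewrite big_ord0; move: hu; rewrite expn0; case: u.
rewrite big_ord_recl /= expn0 divn1 muln1.
under eq_bigr => j _ do rewrite /bump /= add1n expnS divnMA mulnCA.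
rewrite -big_distrr /= IH.
  by rewrite {3}(divn_eq u 2) modn2 mulnC addnC.
by rewrite ltn_divLR // mulnC -expnS.
Qed.

Local Open Scope ring_scope.

Lemma bitpoly_inj d u v : (u < 2 ^ d)%N -> (v < 2 ^ d)%N -> bitpoly d u = bitpoly d v -> u = v.
Proof.
move=> hu hv E; rewrite -(bits_sum _ _ hu) -(bits_sum _ _ hv); apply: eq_bigr => j _.
have := congr1 (fun q : {poly 'F_2} => q`_j) E; rewrite /bitpoly !coef_poly ltn_ord.
by case: odd; case: odd.
Qed.

Local Close Scope ring_scope.

Lemma card_inj_pre (T U : finType) (f : T -> U) (P : pred U) :
  injective f -> #|T| = #|U| -> #|[set t | P (f t)]| = #|[set u | P u]|.
Proof.
move=> fi hc.
have H (Q : pred U) : #|[set t | Q (f t)]| <= #|[set u | Q u]|.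
  rewrite -(card_imset _ fi); apply: subset_leq_card; apply/subsetP => _ /imsetP[t Qt ->].
  by move: Qt; rewrite !inE.
have h1 := H P; have h2 := H (predC P).
have c1 := cardsC [set t | P (f t)]; have c2 := cardsC [set u | P u].
have e1 : ~: [set t | P (f t)] = [set t | (predC P) (f t)] by apply/setP => t; rewrite !inE.
have e2 : ~: [set u | P u] = [set u | (predC P) u] by apply/setP => t; rewrite !inE.
rewrite e1 in c1; rewrite e2 in c2.
apply/eqP; rewrite eqn_leq h1 /=.
rewrite -(leq_add2r #|[set t | predC P (f t)]|) c1 hc -c2 leq_add2l.
done.
Qed.

Lemma tz_le d r s : s <= d -> (s <= tz d r) = [forall j : 'I_d, (j < s) ==> (r`_j == 0)%R].
Proof.
move=> sd; rewrite /tz; apply/idP/forallP => [h j|h].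
  apply/implyP => js.
  have := @before_find _ 0 (fun j => coefnz r j) (iota 0 d) j (leq_trans js h).
  by rewrite nth_iota // add0n /coefnz => /negbT; rewrite negbK.
rewrite leqNgt; apply/negP => hf.
have hs : has (fun j => coefnz r j) (iota 0 d) by rewrite has_find size_iota (leq_trans hf).
have := nth_find 0 hs; set k := find _ _.
have kd : k < d by rewrite -(size_iota 0 d) -has_find.
rewrite nth_iota // add0n /coefnz.
by have := h (Ordinal kd); rewrite /= hf /= => ->.
Qed.

Lemma tz_leq d r : tz d r <= d.
Proof. by rewrite /tz -{2}(size_iota 0 d) find_size. Qed.

Lemma card_lowzero d s : s <= d ->
  #|[set f : {ffun 'I_d -> 'F_2} | [forall j : 'I_d, (j < s) ==> (f j == 0)%R]]| = 2 ^ (d - s).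
Proof.
move=> sd.
pose F := fun j : 'I_d => if (j < s) then pred1 (0%R : 'F_2) else predT.
have -> : [set f : {ffun 'I_d -> 'F_2} | [forall j : 'I_d, (j < s) ==> (f j == 0)%R]] = [set f in family F].
  apply/setP => f; rewrite !inE; apply/forallP/familyP => h j; have := h j; rewrite /F;
  by case: (j < s).
rewrite cardsE card_family /F foldrE big_image /=.
rewrite (eq_bigr (fun j : 'I_d => if j < s then 1 else 2)); last first.
  by move=> j _; case: (j < s); rewrite ?card1 // cardT size_enum_ord.
rewrite -(big_mkord xpredT (fun j => if j < s then 1 else 2)) (big_cat_nat (n := s)) //=.
rewrite big_nat_cond big1 ?mul1n; last by move=> i /andP[/andP[_ ->]].
rewrite big_nat_cond (eq_bigr (fun _ => 2)); last by move=> i /andP[/andP[]]; rewrite leqNgt => /negbTE ->.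
by rewrite -big_nat_cond prod_nat_const_nat.
Qed.
Local Open Scope ring_scope.

Section Poly.
Variables (d : nat) (p : {poly 'F_2}).
Hypotheses (sp : size p = d.+1) (ip : irreducible_poly p).

Lemma size_bitpoly u : (size (bitpoly d u) < size p)%N.
Proof. by rewrite sp ltnS size_poly. Qed.

Lemma p_neq0 : p != 0.
Proof. by rewrite -size_poly_eq0 sp. Qed.

Lemma small_dvd0 (r : {poly 'F_2}) : (size r < size p)%N -> p %| r -> r = 0.
Proof.
move=> hs hd; apply/eqP; apply: contraTT hs => r0.
by rewrite -leqNgt dvdp_leq.
Qed.

Lemma coprime_small (r : {poly 'F_2}) : r != 0 -> (size r < size p)%N -> coprimep p r.
Proof.
move=> r0 hs; rewrite coprimep_def.
case: eqP => // /eqP g1.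
have := ip.2 _ g1 (dvdp_gcdl p r) => /eqp_size e.
have := dvdp_leq r0 (dvdp_gcdr p r); rewrite e => h.
by move: (leq_ltn_trans h hs); rewrite ltnn.
Qed.

Lemma mod_eq_dvd (a b : {poly 'F_2}) : a %% p = b %% p -> p %| a - b.
Proof. by move=> e; apply/modp_eq0P; rewrite modpD modpN e subrr. Qed.

Lemma size_sub_small (a b : {poly 'F_2}) : (size a < size p)%N -> (size b < size p)%N -> (size (a - b)%R < size p)%N.
Proof.
move=> ha hb; apply: leq_ltn_trans (size_add _ _) _.
by rewrite size_opp gtn_max ha hb.
Qed.

Lemma gf2 (a : {ffun 'I_2 -> 'I_(2 ^ d)}) x :
  gf_eval p a x = (bitpoly d (a ord0) + bitpoly d (a (lift ord0 ord0)) * bitpoly d x) %% p.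
Proof. by rewrite /gf_eval !big_ord_recl big_ord0 expr0 expr1 mulr1 addr0. Qed.

Definition code (r : {poly 'F_2}) : {ffun 'I_d -> 'F_2} := [ffun j : 'I_d => r`_j].

Lemma code_inj (r1 r2 : {poly 'F_2}) : (size r1 < size p)%N -> (size r2 < size p)%N -> code r1 = code r2 -> r1 = r2.
Proof.
rewrite sp !ltnS => h1 h2 e; apply/polyP => j.
case: (ltnP j d) => hj.
  by have := congr1 (fun f : {ffun 'I_d -> 'F_2} => f (Ordinal hj)) e; rewrite !ffunE.
by rewrite !nth_default // (leq_trans _ hj).
Qed.

Lemma size_gf (a : {ffun 'I_2 -> 'I_(2 ^ d)}) x : (size (gf_eval p a x) < size p)%N.
Proof. by rewrite /gf_eval ltn_modp p_neq0. Qed.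


Lemma ord2_cases (i : 'I_2) : i = ord0 \/ i = lift ord0 ord0.
Proof. by case: i => [[|[|]]] // hi; [left|right]; apply: val_inj. Qed.

Lemma ffun2_eq (a b : {ffun 'I_2 -> 'I_(2 ^ d)}) :
  a ord0 = b ord0 -> a (lift ord0 ord0) = b (lift ord0 ord0) -> a = b.
Proof. by move=> e0 e1; apply/ffunP => i; case: (ord2_cases i) => ->. Qed.


Lemma inj_pair x y : (x < 2 ^ d)%N -> (y < 2 ^ d)%N -> x != y ->
  injective (fun a : {ffun 'I_2 -> 'I_(2 ^ d)} => (code (gf_eval p a x), code (gf_eval p a y))).
Proof.
move=> hx hy xy a b [ex ey].
move/code_inj: ex => /(_ (size_gf _ _) (size_gf _ _)); rewrite !gf2 => /mod_eq_dvd dx.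
move/code_inj: ey => /(_ (size_gf _ _) (size_gf _ _)); rewrite !gf2 => /mod_eq_dvd dy.
set A0 := bitpoly d (a ord0) in dx dy; set A1 := bitpoly d (a (lift ord0 ord0)) in dx dy.
set B0 := bitpoly d (b ord0) in dx dy; set B1 := bitpoly d (b (lift ord0 ord0)) in dx dy.
set X := bitpoly d x in dx dy; set Y := bitpoly d y in dx dy.
have hxy : X - Y != 0.
  by rewrite subr_eq0; apply/eqP => /bitpoly_inj => /(_ hx hy) /eqP; apply/negP.
have d1 : p %| (A1 - B1) * (X - Y).
  have := dvdp_sub dx dy.
  by rewrite (_ : A0 + A1 * X - (B0 + B1 * X) - (A0 + A1 * Y - (B0 + B1 * Y)) = (A1 - B1) * (X - Y)) //; ring.
rewrite Gauss_dvdpl in d1; last by apply: coprime_small => //; apply: size_sub_small; apply: size_bitpoly.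
have e1 : A1 = B1 by apply/subr0_eq/small_dvd0 => //; apply: size_sub_small; apply: size_bitpoly.
rewrite e1 in dx.
have e0 : A0 = B0.
  apply/subr0_eq/small_dvd0; first by apply: size_sub_small; apply: size_bitpoly.
  by rewrite (_ : A0 - B0 = A0 + B1 * X - (B0 + B1 * X)) //; ring.
apply: ffun2_eq; apply: val_inj; apply: (bitpoly_inj d) => //; exact: ltn_ord.
Qed.

Lemma inj_single x :
  injective (fun a : {ffun 'I_2 -> 'I_(2 ^ d)} => (code (gf_eval p a x), a (lift ord0 ord0))).
Proof.
move=> a b [ex e1].
move/code_inj: ex => /(_ (size_gf _ _) (size_gf _ _)); rewrite !gf2 e1 => /mod_eq_dvd dx.
apply: ffun2_eq => //; apply: val_inj; apply: (bitpoly_inj d); try exact: ltn_ord.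
apply/subr0_eq/small_dvd0; first by apply: size_sub_small; apply: size_bitpoly.
have K : forall u v w : {poly 'F_2}, u + w - (v + w) = u - v by move=> *; ring.
by move: dx; rewrite K.
Qed.


Lemma card_code : #|{ffun 'I_d -> 'F_2}| = (2 ^ d)%N.
Proof. by rewrite card_ffun card_ord cardT size_enum_ord. Qed.

Lemma card_Om : #|{ffun 'I_2 -> 'I_(2 ^ d)}| = (2 ^ d * 2 ^ d)%N.
Proof. by rewrite card_ffun !card_ord expnS expn1. Qed.

Lemma count_single x s : (s <= d)%N ->
  #|[set a : {ffun 'I_2 -> 'I_(2 ^ d)} | (s <= tz d (gf_eval p a x))%N]| = (2 ^ (d - s) * 2 ^ d)%N.
Proof.
move=> sd.
pose P := fun z : {ffun 'I_d -> 'F_2} * 'I_(2 ^ d) => [forall j : 'I_d, (j < s)%N ==> (z.1 j == 0)].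
transitivity #|[set a : {ffun 'I_2 -> 'I_(2 ^ d)} | P (code (gf_eval p a x), a (lift ord0 ord0))]|.
  apply: eq_card => a; rewrite !inE tz_le //; apply: eq_forallb => j; by rewrite ffunE.
rewrite (card_inj_pre _ _ _ P (@inj_single x)); last by rewrite card_Om card_prod card_code card_ord.
have -> : [set z | P z] = setX [set f : {ffun 'I_d -> 'F_2} | [forall j : 'I_d, (j < s)%N ==> (f j == 0)]] setT.
  by apply/setP => -[f w]; rewrite !inE andbT.
by rewrite cardsX card_lowzero // cardsT card_ord.
Qed.

Lemma count_pair x y s : (s <= d)%N -> (x < 2 ^ d)%N -> (y < 2 ^ d)%N -> x != y ->
  #|[set a : {ffun 'I_2 -> 'I_(2 ^ d)} | (s <= tz d (gf_eval p a x))%N && (s <= tz d (gf_eval p a y))%N]|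
   = (2 ^ (d - s) * 2 ^ (d - s))%N.
Proof.
move=> sd hx hy xy.
pose Q := fun f : {ffun 'I_d -> 'F_2} => [forall j : 'I_d, (j < s)%N ==> (f j == 0)].
pose P := fun z : {ffun 'I_d -> 'F_2} * {ffun 'I_d -> 'F_2} => Q z.1 && Q z.2.
transitivity #|[set a : {ffun 'I_2 -> 'I_(2 ^ d)} | P (code (gf_eval p a x), code (gf_eval p a y))]|.
  apply: eq_card => a; rewrite !inE !tz_le //; congr andb; apply: eq_forallb => j; by rewrite ffunE.
rewrite (card_inj_pre _ _ _ P (inj_pair _ _ hx hy xy)); last by rewrite card_Om card_prod card_code.
have -> : [set z | P z] = setX [set f | Q f] [set f | Q f].
  by apply/setP => -[f w]; rewrite !inE.
by rewrite cardsX card_lowzero.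
Qed.

End Poly.
Local Close Scope ring_scope.


Lemma card_sum (T : finType) (A : {set T}) (P : pred T) :
  #|[set x in A | P x]| = \sum_(x in A) (P x : nat).
Proof.
rewrite -sum1_card (eq_bigl (fun x => (x \in A) && P x)); last by move=> x; rewrite !inE.
by rewrite big_mkcondr /=; apply: eq_bigr => x _; case: (P x).
Qed.

Lemma card_sum' (T : finType) (P : pred T) :
  #|[set x | P x]| = \sum_x (P x : nat).
Proof.
rewrite -sum1_card (eq_bigl P); last by move=> x; rewrite !inE.
by rewrite big_mkcond /=; apply: eq_bigr => x _; case: (P x).
Qed.

Lemma moments (T : finType) (n : nat) (A : {set 'I_n}) (I : 'I_n -> T -> bool) (c1 c2 : nat) :
 (forall x, #|[set t | I x t]| = c1) ->
 (forall x y, x != y -> #|[set t | I x t && I y t]| = c2) ->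
 A != set0 ->
 \sum_t #|[set x in A | I x t]| = #|A| * c1  /\
 \sum_t #|[set x in A | I x t]| ^ 2 = #|A| * (c1 + (#|A| - 1) * c2).
Proof.
move=> h1 h2 hA; split.
  under eq_bigr => t _ do rewrite card_sum.
  rewrite exchange_big /= (eq_bigr (fun _ => c1)) ?sum_nat_const //.
  by move=> x _; rewrite -(h1 x) card_sum'.
under eq_bigr => t _ do rewrite card_sum expnS expn1 big_distrl /=.
under eq_bigr => t _ do under eq_bigr => x _ do rewrite big_distrr /=.
rewrite exchange_big /= (eq_bigr (fun _ => c1 + (#|A| - 1) * c2)) ?sum_nat_const //.
move=> x xA.
rewrite exchange_big /= (bigD1 x) //= -(h1 x) card_sum'.
have -> : \sum_(i in A | i != x) \sum_t (I x t * I i t) = \sum_(i in A | i != x) c2.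
  apply: eq_bigr => y /andP[_ yx]; rewrite -(h2 x y) 1?eq_sym // card_sum'.
  by apply: eq_bigr => t _; case: (I x t); case: (I y t).
rewrite sum_nat_const (eq_bigr (fun t => (I x t : nat))); last by move=> t _; case: (I x t).
congr (_ + _); congr (_ * _).
rewrite (cardsD1 x A) xA add1n subn1 /=.
by apply: eq_card => y; rewrite !inE andbC.
Qed.

Local Open Scope ring_scope.

Lemma cheb (R : realType) (T : finType) (X : T -> R) (m c : R) : 0 <= c ->
  (#|[set t | c < `|X t - m|]|)%:R * c ^+ 2 <= \sum_t (X t - m) ^+ 2.
Proof.
move=> c0; rewrite -sum1_card natr_sum mulr_suml.
apply: le_trans (_ : \sum_(t in [set t | c < `|X t - m|]) (X t - m) ^+ 2 <= _).
  apply: ler_sum => t; rewrite inE mul1r => h.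
  by rewrite -[X in _ <= X]real_normK ?num_real // lerXn2r ?nnegrE ?normr_ge0 // ltW.
rewrite [X in _ <= X](bigID (fun t => t \in [set t | c < `|X t - m|])) /=.
rewrite lerDl.
by apply: sumr_ge0 => t _; rewrite sqr_ge0.
Qed.

Lemma var_expand (R : realType) (T : finType) (X : T -> R) (m : R) :
  \sum_t (X t - m) ^+ 2 = \sum_t X t ^+ 2 - 2 * m * \sum_t X t + #|T|%:R * m ^+ 2.
Proof.
rewrite (eq_bigr (fun t => (X t ^+ 2 - (2 * m) * X t) + m ^+ 2)); last first. move=> t _. ring.
rewrite big_split /= sumrB -mulr_sumr sumr_const; congr (_ + _); by rewrite mulr_natl.
Qed.

Lemma per_s (R : realType) (T : finType) (Xn : T -> nat) (a P q : nat) (eps : R) :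
 0 < eps -> (0 < a)%N -> (0 < P)%N ->
 #|T| = (P * q * (P * q))%N ->
 (\sum_t Xn t = a * (q * (P * q)))%N ->
 (\sum_t Xn t ^ 2 = a * (q * (P * q) + (a - 1) * (q * q)))%N ->
 (#|[set t | eps / 3 * (a%:R / P%:R) < `|(Xn t)%:R - a%:R / P%:R|]|)%:R * eps ^+ 2 * a%:R
   <= 9 * (#|T|)%:R * P%:R.
Proof.
move=> e0 a0 P0 hT h1 h2.
set mu := a%:R / P%:R.
have c0 : 0 <= eps / 3 * mu by rewrite /mu !mulr_ge0 ?invr_ge0 ?ler0n // ltW.
have hc := cheb _ _ (fun t : T => ((Xn t)%:R : R)) mu _ c0.
rewrite var_expand in hc.
have S1 : \sum_t ((Xn t)%:R : R) = a%:R * (q%:R * (P%:R * q%:R)).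
  by rewrite -natr_sum h1 !natrM.
have S2 : \sum_t ((Xn t)%:R : R) ^+ 2 = a%:R * (q%:R * (P%:R * q%:R) + (a%:R - 1) * (q%:R * q%:R)).
  rewrite (eq_bigr (fun t => ((Xn t ^ 2)%N)%:R)); last by move=> t _; rewrite natrX.
  by rewrite -natr_sum h2 natrM natrD !natrM natrB // natr1.
rewrite S1 S2 hT /mu in hc; rewrite hT.
move: hc; set Bc := (#|_|)%:R; move=> hc.
set ar := (a%:R : R) in hc *; set Pr := (P%:R : R) in hc *; set qr := (q%:R : R) in hc *.
have ar0 : 0 < ar by rewrite ltr0n.
have Pr0 : 0 < Pr by rewrite ltr0n.
have k0 : 0 < ar / (9 * Pr ^+ 2) by rewrite divr_gt0 // mulr_gt0 // exprn_gt0.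
rewrite -(ler_pM2r k0).
have F1 : Bc * (eps / 3 * (ar / Pr)) ^+ 2 = Bc * eps ^+ 2 * ar * (ar / (9 * Pr ^+ 2)).
  by field; rewrite gt_eqF.
have F2 : ar * (qr * (Pr * qr) + (ar - 1) * (qr * qr)) - 2 * (ar / Pr) * (ar * (qr * (Pr * qr))) +
   (((P * q * (P * q))%N)%:R : R) * (ar / Pr) ^+ 2
   = (9 * (((P * q * (P * q))%N)%:R) * Pr - 9 * Pr ^+ 2 * qr ^+ 2) * (ar / (9 * Pr ^+ 2)).
  by rewrite !natrM -/Pr -/qr; field; rewrite pnatr_eq0 -lt0n.
rewrite F1 F2 in hc; apply: (le_trans hc). rewrite ler_pM2r // lerBlDr lerDl.
by rewrite ?mulr_ge0 ?exprn_ge0 ?ler0n ?(ltW Pr0).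
Qed.

Local Close Scope ring_scope.


Lemma geo (C B m : nat) : \sum_(s < m | 2 ^ s * B <= C) 2 ^ s * B <= 2 * C.
Proof.
suff : \sum_(s < m | 2 ^ s * B <= C) 2 ^ s * B <= 2 * C /\
       \sum_(s < m | 2 ^ s * B <= C) 2 ^ s * B + B <= 2 ^ m * B by case.
elim: m => [|m [IH1 IH2]]; first by rewrite big_ord0 expn0 mul1n.
rewrite big_mkcond big_ord_recr /= -big_mkcond expnS.
move: IH1 IH2; set S := \sum_(_ < _ | _) _; set X := 2 ^ m.
case: ifP => h; lia.
Qed.

Local Open Scope ring_scope.

Lemma aux1 (F : fieldType) (x y z : F) : x != 0 -> x^-1 * z * (x * y) = y * z.
Proof. by move=> h; field. Qed.

Lemma aux2 (F : fieldType) (x w z : F) : x != 0 -> x^-1 * z * (w * x) = w * z.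
Proof. by move=> h; field. Qed.

Lemma bad_s (R : realType) (eps : R) n (A : {set 'I_n}) (f : 'I_n -> nat) d :
 0 < eps -> (9 <= beta eps)%N -> (forall x, f x <= d)%N ->
 E1 eps A f -> ~~ E2 eps A f ->
 exists s : 'I_d.+1, (2 ^ s * bb eps <= 2 ^ 16 * #|A|)%N /\
   eps / 3 * (#|A|%:R / (2 ^ s)%:R) < `|(#|[set x in A | (s <= f x)%N]|)%:R - #|A|%:R / (2 ^ s)%:R|.
Proof.
move=> e0 b9 fd /andP[h1 _] nE2.
case: (lerP (tf eps A f) 0) => ht.
  exfalso; move/negP: nE2; apply.
  have s0 : sf eps A f = 0 by rewrite /sf max_l.
  have RA : Rf eps A f = A.
    by apply/setP => x; rewrite !inE s0 lez_nat leq0n andbT.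
  rewrite /E2 RA s0 expr0z mul1r subrr normr0.
  by rewrite mulr_ge0 ?divr_ge0 ?ler0n ?ltW.
set M := (\max_(a in A) f a)%N.
have Md : (M <= d)%N by apply/bigmax_leqP => x _; apply: fd.
have ts : tf eps A f = (M + 9 - beta eps)%N%:Z.
  move: ht; rewrite /tf -/M; lia.
set s := (M + 9 - beta eps)%N in ts.
have sd : (s < d.+1)%N by rewrite ltnS /s; lia.
have ss : sf eps A f = s%:Z by rewrite /sf ts max_r.
exists (Ordinal sd) => /=; split.
  rewrite -(ler_nat R) (natrM R (2 ^ s) (bb eps)) (natrM R (2 ^ 16) #|A|) (natrX R 2 s) (natrX R 2 16).
  rewrite /E1 ts -exprnN in h1.
  have P0 : (0 : R) < 2 ^+ 16 * 2 ^+ s by rewrite mulr_gt0 // exprn_gt0.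
  rewrite -(ler_pM2r P0) in h1.
  have n2 : forall k, (2 : R) ^+ k != 0 by move=> k; rewrite expf_neq0 // pnatr_eq0.
  rewrite (aux1 _ _ _ _ (n2 16)) (aux2 _ _ _ _ (n2 s)) in h1.
  exact: h1.
rewrite ltNge; move: nE2; rewrite /E2 ss.
have -> : Rf eps A f = [set x in A | (s <= f x)%N].
  by apply/setP => x; rewrite !inE ss lez_nat.
by rewrite -exprnN natrX mulrC.
Qed.

Local Open Scope ring_scope.

Theorem lemma10 (R : realType) (n : nat) (eps : R)
  (d1 d2 d3 : nat) (p1 p2 p3 : {poly 'F_2}) :
  (1 <= n)%N -> 0 < eps < 1 ->
  (1 <= d1)%N -> (n <= 2 ^ d1)%N -> size p1 = d1.+1 -> irreducible_poly p1 ->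
  (1 <= d2)%N -> (n <= 2 ^ d2)%N -> (5 + 2 * beta eps <= d2)%N ->
  size p2 = d2.+1 -> irreducible_poly p2 ->
  (1 <= d3)%N -> (2 ^ 5 * bb eps ^ 2 <= 2 ^ d3)%N -> (beta eps <= d3)%N ->
  size p3 = d3.+1 -> irreducible_poly p3 ->
  forall A : {set 'I_n}, A != set0 ->
  prob R (T := ({ffun 'I_2 -> 'I_(2 ^ d1)} * {ffun 'I_2 -> 'I_(2 ^ d2)}
                 * {ffun 'I_(kk eps) -> 'I_(2 ^ d3)})%type)
    (fun psi =>
       let f := Gfun p1 psi.1.1 (N := n) in
       E1 eps A f && ~~ E2 eps A f)
  <= (2 : R) ^- 6.
Proof.
move=> hn heps hd1 hnd1 sp1 ip1 _ _ _ _ _ _ _ _ _ _ A hA.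
have e0 : 0 < eps by case/andP: heps.
pose Om := {ffun 'I_2 -> 'I_(2 ^ d1)}.
pose G := fun w : Om => E1 eps A (Gfun p1 w (N := n)) && ~~ E2 eps A (Gfun p1 w (N := n)).
rewrite /prob.
have -> : [set x : ({ffun 'I_2 -> 'I_(2 ^ d1)} * {ffun 'I_2 -> 'I_(2 ^ d2)}
                 * {ffun 'I_(kk eps) -> 'I_(2 ^ d3)})%type |
   (let f := Gfun p1 x.1.1 (N := n) in E1 eps A f && ~~ E2 eps A f)]
   = setX (setX [set w | G w] setT) setT.
  by apply/setP => -[[w g] h]; rewrite !inE !andbT.
rewrite !cardsX !cardsT !card_prod !natrM.
set Y := (#|{ffun 'I_2 -> 'I_(2 ^ d2)}|)%:R; set Z := (#|{ffun 'I_(kk eps) -> 'I_(2 ^ d3)}|)%:R.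
have Y0 : Y != 0 by rewrite /Y pnatr_eq0 -lt0n card_ffun card_ord expn_gt0 expn_gt0.
have Z0 : Z != 0 by rewrite /Z pnatr_eq0 -lt0n card_ffun card_ord expn_gt0 expn_gt0.
have -> : (#|[set w | G w]|)%:R * Y * Z / ((#|Om|)%:R * Y * Z) = (#|[set w | G w]|)%:R / (#|Om|)%:R :> R.
  by field; rewrite !pnatr_eq0 -!lt0n !card_ffun !card_ord !expn_gt0.
have a0 : (0 < #|A|)%N by rewrite card_gt0.
have hB := bb_ge _ _ heps.
have e2 : 0 < eps ^+ 2 by rewrite exprn_gt0.
have K : (9 * 2^+23 : R) = (9 * 2^23)%N%:R by rewrite natrM natrX.
have cge : 9 * 2^+23 <= 9 * 2^+23 / eps^+2.
  rewrite ler_pdivlMr // ler_piMr // ?K ?ler0n //.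
  by rewrite expr_le1 // ltW //; case/andP: heps.
have b9 : (9 <= beta eps)%N.
  have : ((2 ^ 9)%N%:R : R) < (bb eps)%:R.
    apply: lt_le_trans hB; apply: lt_le_trans cge; rewrite K ltr_nat.
    by [].
  by rewrite ltr_nat /bb ltn_exp2l // => /ltnW.
pose X (s : nat) (w : Om) := #|[set x in A | (s <= Gfun p1 w x)%N]|.
pose Bad (s : nat) := [set w : Om | eps / 3 * (#|A|%:R / (2 ^ s)%:R) < `|(X s w)%:R - #|A|%:R / (2 ^ s)%:R|].
have card_sumI (T : finType) (B : {set T}) : #|B| = (\sum_t (t \in B : nat))%N.
  by rewrite -sum1_card big_mkcond; apply: eq_bigr => t _; case: (t \in B).
have stepA : (#|[set w | G w]| <= \sum_(s < d1.+1 | (2 ^ s * bb eps <= 2 ^ 16 * #|A|)%N) #|Bad s|)%N.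
  rewrite (eq_bigr (fun s : 'I_d1.+1 => \sum_w (w \in Bad s : nat))); last by move=> s _; rewrite card_sumI.
  rewrite exchange_big /= card_sumI; apply: leq_sum => w _.
  case Gw: (w \in [set w | G w]) => //.
  move: Gw; rewrite inE => /andP[h1 h2].
  have [s [c hs]] := @bad_s R eps n A (Gfun p1 w (N := n)) d1 e0 b9 (fun x => tz_leq _ _) h1 h2.
  rewrite (bigD1 s) //= inE.
  by move: hs => /= ->.
have stepB : forall s : 'I_d1.+1, (#|Bad s|)%:R * eps ^+ 2 * #|A|%:R <= 9 * (#|Om|)%:R * (2 ^ s)%:R.
  move=> s; have sd : (s <= d1)%N by rewrite -ltnS.
  have PQ : (2 ^ s * 2 ^ (d1 - s) = 2 ^ d1)%N by rewrite -expnD subnKC.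
  have Om_eq : #|Om| = (2 ^ s * 2 ^ (d1 - s) * (2 ^ s * 2 ^ (d1 - s)))%N by rewrite card_Om PQ.
  have h1' : forall x : 'I_n, #|[set w : Om | (s <= Gfun p1 w x)%N]| = (2 ^ (d1 - s) * 2 ^ d1)%N.
    by move=> x; exact: (count_single _ _ sp1 x s sd).
  have h2' : forall x y : 'I_n, x != y ->
     #|[set w : Om | (s <= Gfun p1 w x)%N && (s <= Gfun p1 w y)%N]| = (2 ^ (d1 - s) * 2 ^ (d1 - s))%N.
    move=> x y xy; apply: (count_pair _ _ sp1 ip1 x y s sd).
    - exact: leq_trans (ltn_ord x) hnd1.
    - exact: leq_trans (ltn_ord y) hnd1.
    - by apply: contra xy => /eqP h; apply/eqP; apply: val_inj.
  have [m1 m2] := moments _ _ A (fun x (w : Om) => (s <= Gfun p1 w x)%N) _ _ h1' h2' hA.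
  have := @per_s R Om (X s) #|A| (2 ^ s) (2 ^ (d1 - s)) eps e0 a0 (expn_gt0 _ _) Om_eq.
  rewrite PQ; apply; [exact: m1 | exact: m2].
have stepC := geo (2 ^ 16 * #|A|) (bb eps) d1.+1.
set X0 := (#|[set w | G w]|)%:R : R.
set O := (#|Om|)%:R : R.
set B := (bb eps)%:R : R.
set ar := (#|A|)%:R : R.
set S := \sum_(s < d1.+1 | (2 ^ s * bb eps <= 2 ^ 16 * #|A|)%N) ((2 ^ s)%N%:R : R).
have ar0 : 0 < ar by rewrite ltr0n.
have O0 : 0 < O by rewrite ltr0n card_Om muln_gt0 expn_gt0.
have B0 : 0 <= B by rewrite ler0n.
have X00 : 0 <= X0 by rewrite ler0n.
have hA1 : X0 <= \sum_(s < d1.+1 | (2 ^ s * bb eps <= 2 ^ 16 * #|A|)%N) (#|Bad s|)%:R.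
  by rewrite -natr_sum ler_nat.
have h2 : X0 * (eps ^+ 2 * ar) <= 9 * O * S.
  apply: le_trans (ler_wpM2r _ hA1) _; first by rewrite mulr_ge0 ?ltW.
  rewrite mulr_suml /S mulr_sumr; apply: ler_sum => s _; rewrite mulrA; exact: stepB s.
have h3 : S * B <= 2 * (2 ^+ 16 * ar).
  have := stepC; rewrite -(ler_nat R) natr_sum natrM natrM (natrX R 2 16) => h.
  by apply: le_trans h; rewrite /S mulr_suml; apply: ler_sum => s _; rewrite natrM.
have h4 : X0 * (eps ^+ 2 * B) * ar <= 9 * O * 2 ^+ 17 * ar.
  have -> : X0 * (eps ^+ 2 * B) * ar = X0 * (eps ^+ 2 * ar) * B by ring.
  apply: le_trans (ler_wpM2r B0 h2) _.
  have -> : 9 * O * S * B = 9 * O * (S * B) by ring.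
  have -> : 9 * O * 2 ^+ 17 * ar = 9 * O * (2 * (2 ^+ 16 * ar)) by ring.
  by apply: ler_wpM2l => //; rewrite mulr_ge0 ?ltW.
have h5 : X0 * (eps ^+ 2 * B) <= 9 * O * 2 ^+ 17 by rewrite -(ler_pM2r ar0).
have h6 : 9 * 2 ^+ 23 <= eps ^+ 2 * B.
  by rewrite [_ * B]mulrC -(ler_pdivrMr _ _ e2).
have h7 : X0 * (9 * 2 ^+ 23) <= 9 * O * 2 ^+ 17 := le_trans (ler_wpM2l X00 h6) h5.
rewrite ler_pdivrMr //.
have k0 : (0 : R) < 9 * 2 ^+ 23 by rewrite K ltr0n.
rewrite -(ler_pM2r k0); apply: le_trans h7 _.
have -> : 2 ^- 6 * O * (9 * 2 ^+ 23) = 9 * O * 2 ^+ 17 :> R by field; rewrite ?expf_neq0.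
done.
Qed.
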